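(* Under the standing assumptions (with $K\neq 0$), for $r\in[0,r_A)$ the matrix $I-\tilde A-rK$ is invertible and $M(r):=L[I-\tilde A-rK]^{-1}B$ satisfies: (i) $M(r)$ is entrywise strictly positive and depends continuously on $r$; (ii) for $0\le r_1<r_2<r_A$, $M(r_1)<M(r_2)$ entrywise strictly (every entry strictly increases); (iii) $r\mapsto\lambda_{\max}(M(r))$ is strictly increasing on $[0,r_A)$ and $\lambda_{\max}(M(r))\to+\infty$ as $r\to r_A^-$.
   Context: Fix $n\ge 2$. $A$ and $K$ are $n\times n$ entrywise nonnegative real matrices, with $K$ not the zero matrix; $\delta_1,\dots,\delta_n\in(0,1]$, $D=K\,\mathrm{diag}(\delta_1,\dots,\delta_n)$, and $\tilde A=A+D$. $L=\mathrm{diag}(l_1,\dots,l_n)$ with all $l_j>0$. $B$ is an $n\times n$ entrywise nonnegative matrix with no zero column. Standing assumption: $\tilde A$ is irreducible and $\lambda_{\max}(\tilde A)<1$, where $\lambda_{\max}(X)$ denotes the spectral radius of a square matrix $X$. $r_A>0$ denotes the (technical maximum) profit rate defined by $\lambda_{\max}(\tilde A+r_AK)=1$; for $r\in[0,r_A)$ one has $\lambda_{\max}(\tilde A+rK)<1$. *)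

(* Defs.v *)
From HB Require Import structures.
From mathcomp Require Import all_boot all_order all_algebra.
From mathcomp Require Import all_classical all_reals all_analysis.
From mathcomp Require Import complex.
Set Implicit Arguments. Unset Strict Implicit. Unset Printing Implicit Defensive.
Import Order.TTheory GRing.Theory Num.Theory.
Import numFieldNormedType.Exports.
Local Open Scope ring_scope.
Local Open Scope classical_set_scope.

Definition complexify (R : realType) (n : nat) (X : 'M[R]_n) : 'M[R[i]]_n :=
  map_mx (fun x => (x%:C)%C) X.

Definition spectral_radius (R : realType) (n : nat) (X : 'M[R]_n) : R :=
  sup [set Normc.normc z | z in [set z : R[i] | eigenvalue (complexify X) z]].

Definition mx_nonneg (R : realType) (m n : nat) (X : 'M[R]_(m, n)) :=
  forall i j, 0 <= X i j.
Definition mx_pos (R : realType) (m n : nat) (X : 'M[R]_(m, n)) :=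
  forall i j, 0 < X i j.

(* Irreducibility of a square matrix: it is not permutation-similar to a
   block (upper) triangular matrix, i.e. there is no nonempty proper set S of
   indices with X i j = 0 for all i outside S and j in S. *)
Definition mx_irreducible (R : realType) (n : nat) (X : 'M[R]_n) :=
  forall S : {set 'I_n}, S != finset.set0 -> S != [set: 'I_n]%SET ->
    exists i j, [/\ i \notin S, j \in S & X i j != 0].

Definition Mmat (R : realType) (n : nat) (L At K B : 'M[R]_n) (r : R) : 'M[R]_n :=
  L *m invmx (1%:M - At - r *: K) *m B.

(* Main.v *)
Require Import Defs.
From HB Require Import structures.
From mathcomp Require Import all_boot all_order all_algebra.
From mathcomp Require Import all_classical all_reals all_analysis.
From mathcomp Require Import complex.
From mathcomp Require Import ring lra zify.
Import Order.TTheory GRing.Theory Num.Theory.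
Import numFieldNormedType.Exports.
Local Open Scope ring_scope.
Local Open Scope classical_set_scope.
Set Implicit Arguments. Unset Strict Implicit.
Section Ana.
Variable R : realType.

Lemma cvg_sum_fin (T : Type) (F : set_system T) {FF : Filter F}
  (I : finType) (f : I -> T -> R) (a : I -> R) :
  (forall i, f i x @[x --> F] --> a i) ->
  (\sum_i f i x) @[x --> F] --> \sum_i a i.
Proof.
move=> H.
suff: forall s : seq I, (\sum_(i <- s) f i x) @[x --> F] --> \sum_(i <- s) a i.
  by apply.
elim => [|i s IH].
  rewrite big_nil; under eq_cvg do rewrite big_nil; exact: cvg_cst.
rewrite big_cons; under eq_cvg do rewrite big_cons.
exact: cvgD.
Qed.

Lemma cvg_prod_fin (T : Type) (F : set_system T) {FF : Filter F}
  (I : finType) (f : I -> T -> R) (a : I -> R) :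
  (forall i, f i x @[x --> F] --> a i) ->
  (\prod_i f i x) @[x --> F] --> \prod_i a i.
Proof.
move=> H.
suff: forall s : seq I, (\prod_(i <- s) f i x) @[x --> F] --> \prod_(i <- s) a i.
  by apply.
elim => [|i s IH].
  rewrite big_nil; under eq_cvg do rewrite big_nil; exact: cvg_cst.
rewrite big_cons; under eq_cvg do rewrite big_cons.
exact: cvgM.
Qed.

Lemma cvg_det (T : Type) (F : set_system T) {FF : Filter F} (m : nat)
  (f : T -> 'M[R]_m) (M : 'M[R]_m) :
  (forall i j, f x i j @[x --> F] --> M i j) ->
  \det (f x) @[x --> F] --> \det M.
Proof.
move=> H; rewrite /determinant; under eq_cvg do rewrite /determinant.
apply: cvg_sum_fin => s; apply: cvgM; first exact: cvg_cst.
by apply: cvg_prod_fin => i; apply: H.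
Qed.

Lemma cvg_invmx (T : Type) (F : set_system T) {FF : Filter F} (m : nat)
  (f : T -> 'M[R]_m) (M : 'M[R]_m) : M \in unitmx ->
  (forall i j, f x i j @[x --> F] --> M i j) ->
  forall i j, invmx (f x) i j @[x --> F] --> invmx M i j.
Proof.
move=> HM H i j.
have Hd := cvg_det H.
have dM : \det M != 0 by rewrite -unitfE -unitmxE.
have Hc : (\det (f x))^-1 * cofactor (f x) j i @[x --> F] --> (\det M)^-1 * cofactor M j i.
  apply: cvgM; first by apply: cvgV => //; exact: Hd.
  rewrite /cofactor; apply: cvgM; first exact: cvg_cst.
  by apply: cvg_det => a b; rewrite !mxE; under eq_cvg do rewrite !mxE; exact: H.
have -> : invmx M i j = (\det M)^-1 * cofactor M j i.
  by rewrite /invmx HM !mxE.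
apply: cvg_trans Hc; apply: near_eq_cvg.
near=> x.
have dx : \det (f x) != 0 by near: x; exact: cvgr_neq0 (Hd FF) dM.
by rewrite /invmx unitmxE unitfE dx !mxE.
Unshelve. all: by end_near.
Qed.

Lemma cvg_mx_entry (T : Type) (F : set_system T) {FF : Filter F} (m n : nat)
  (f : T -> 'M[R]_(m, n)) (M : 'M[R]_(m, n)) :
  (forall i j, f x i j @[x --> F] --> M i j) -> f x @[x --> F] --> M.
Proof.
move=> H.
apply/cvgrPdist_le => /= e e0.
near=> x.
rewrite /Num.Def.normr/= mx_normrE (bigmax_le _ (ltW e0))//= => i _.
rewrite !mxE/=.
move: i; near: x; apply: filter_forall => /= i.
exact: ((cvgrPdist_le _ _).1 (H i.1 i.2)).
Unshelve. all: by end_near. Qed.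

End Ana.
Set Implicit Arguments. Unset Strict Implicit.
Section Spec.
Variable R : realType.

Lemma normc_real (k : R) : Normc.normc (k%:C)%C = `|k|.
Proof. by rewrite /= expr0n /= addr0 sqrtr_sqr. Qed.

Lemma normc_ge0 (z : R[i]) : 0 <= Normc.normc z.
Proof. by case: z => a b /=; rewrite sqrtr_ge0. Qed.

Lemma normc_sum {m : nat} (F : 'I_m -> R[i]) :
  Normc.normc (\sum_i F i) <= \sum_i Normc.normc (F i).
Proof.
elim/big_ind2: _ => //.
  by rewrite Normc.normc0.
move=> x1 x2 y1 y2 h1 h2; apply: le_trans (le_normcD _ _) _; exact: lerD.
Qed.

Lemma eig_ineq (n : nat) (X : 'M[R]_n) (z : R[i]) :
  eigenvalue (complexify X) z ->
  exists y : 'I_n -> R, [/\ forall i, 0 <= y i, exists i, 0 < y i &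
     forall j, Normc.normc z * y j <= \sum_i y i * `|X i j| ].
Proof.
move=> /eigenvalueP [x Hx xn0].
exists (fun i => Normc.normc (x 0 i)); split.
- by move=> i; apply: normc_ge0.
- have [i Hi] : exists i, x 0 i != 0.
    apply/existsP; move: xn0; apply: contraR; rewrite negb_exists => /forallP H.
    apply/eqP/matrixP => a b; rewrite [a]ord1 mxE; exact/eqP/negbNE/H.
  exists i; rewrite lt_def normc_ge0 andbT; apply/eqP => /Normc.eq0_normc.
  by apply/eqP.
- move=> j.
  move/rowP: Hx => /(_ j); rewrite !mxE => Hj.
  rewrite -Normc.normcM -Hj.
  have h := normc_sum (fun j0 => x 0 j0 * complexify X j0 j). refine (le_trans h _). apply: ler_sum => i _.
  by rewrite mxE Normc.normcM normc_real mulrC.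
Qed.


Lemma eig_bound (n : nat) (X : 'M[R]_n) (z : R[i]) :
  eigenvalue (complexify X) z ->
  Normc.normc z <= \sum_i \sum_j `|X i j|.
Proof.
move=> /eig_ineq [y [y0 [i0 yi0] Hy]].
pose j := [arg max_(j > i0) y j]%O.
have jmax : forall i, y i <= y j.
  rewrite /j; case: (@arg_maxP _ _ _ i0 xpredT y isT) => k _ Hk i; exact: Hk.
have yj0 : 0 < y j by apply: lt_le_trans yi0 (jmax i0).
have H1 := Hy j.
have H2 : \sum_i y i * `|X i j| <= y j * \sum_i \sum_j `|X i j|.
  rewrite mulr_sumr; apply: ler_sum => i _.
  apply: le_trans (ler_wpM2r (normr_ge0 _) (jmax i)) _.
  apply: ler_wpM2l; first exact: ltW.
  rewrite (bigD1 j) //= lerDl; apply: sumr_ge0 => k _; exact: normr_ge0.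
have := le_trans H1 H2; rewrite mulrC ler_pM2l //.
Qed.

Definition specset (n : nat) (X : 'M[R]_n) :=
  [set Normc.normc z | z in [set z : R[i] | eigenvalue (complexify X) z]].

Lemma specset_ub (n : nat) (X : 'M[R]_n) : has_ubound (specset X).
Proof.
exists (\sum_i \sum_j `|X i j|) => x [z Hz <-]; exact: eig_bound.
Qed.

Lemma eig_le_rho (n : nat) (X : 'M[R]_n) (z : R[i]) :
  eigenvalue (complexify X) z -> Normc.normc z <= spectral_radius X.
Proof.
move=> Hz; apply: (ub_le_sup (specset_ub X)); by exists z.
Qed.

Lemma rho_le (n : nat) (X : 'M[R]_n) (c : R) : 0 <= c ->
  (forall z, eigenvalue (complexify X) z -> Normc.normc z <= c) ->
  spectral_radius X <= c.
Proof.
move=> c0 H.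
rewrite /spectral_radius -/(specset X).
have [->|ne] := eqVneq (specset X) set0.
  by rewrite sup0.
apply: ge_sup; first exact/set0P.
by move=> x [z Hz <-]; apply: H.
Qed.

Lemma rho_gt (n : nat) (X : 'M[R]_n) (a : R) : 0 <= a ->
  a < spectral_radius X ->
  exists z, eigenvalue (complexify X) z /\ a < Normc.normc z.
Proof.
move=> a0; rewrite /spectral_radius -/(specset X) => H.
have [e0|ne] := eqVneq (specset X) set0.
  by move: H; rewrite e0 sup0 => /(le_lt_trans a0); rewrite ltxx.
have [x [z Hz <-] ax] := sup_gt (proj1 (set0P _) ne) H.
by exists z.
Qed.

Lemma real_eig (n : nat) (X : 'M[R]_n) (v : 'rV[R]_n) (s : R) :
  v != 0 -> v *m X = s *: v -> `|s| <= spectral_radius X.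
Proof.
move=> vn0 Hv; rewrite -normc_real; apply: eig_le_rho.
apply/eigenvalueP; exists (map_mx (real_complex R) v).
  by rewrite /complexify -map_mxM Hv map_mxZ.
by rewrite map_mx_eq0.
Qed.

End Spec.
Set Implicit Arguments. Unset Strict Implicit.
Section MC.
Variable R : realType.

Lemma nn_mul (m n p : nat) (A : 'M[R]_(m, n)) (B : 'M[R]_(n, p)) :
  mx_nonneg A -> mx_nonneg B -> mx_nonneg (A *m B).
Proof.
move=> HA HB i j; rewrite mxE; apply: sumr_ge0 => k _; exact: mulr_ge0.
Qed.

Lemma mcrit (n : nat) (Y : 'M[R]_n) (v : 'rV[R]_n) :
  mx_nonneg Y -> (1%:M - Y) \in unitmx -> (forall j, 0 < v 0 j) ->
  (forall j, 0 < (v *m (1%:M - Y)) 0 j) -> mx_nonneg (invmx (1%:M - Y)).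
Proof.
move=> Y0 U v0 vZ i k; set Z := 1%:M - Y; set N := invmx Z.
rewrite leNgt; apply/negP => Nik.
set u := row i N.
have uZ : u *m Z = row i 1%:M by rewrite /u -row_mul mulVmx.
pose g := fun j => u 0 j / v 0 j.
pose j0 := [arg min_(j < k) g j]%O.
have j0min : forall j, g j0 <= g j.
  by rewrite /j0; case: (@arg_minP _ _ _ k xpredT g isT) => p _ Hp j; exact: Hp.
set c := g j0.
have c0 : c < 0.
  apply: le_lt_trans (j0min k) _; rewrite /g /u mxE ltr_pdivrMr // mul0r //.
pose w := u - c *: v.
have w0 : forall j, 0 <= w 0 j.
  move=> j; have := j0min j; rewrite /g ler_pdivlMr // => H.
  by rewrite !mxE subr_ge0; move: H; rewrite /c /g /u !mxE.
have wj0 : w 0 j0 = 0.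
  rewrite !mxE /c /g divfK; last by rewrite gt_eqF.
  by rewrite /u mxE subrr.
have H1 : 0 < (w *m Z) 0 j0.
  rewrite /w mulmxBl -scalemxAl uZ !mxE.
  rewrite -mulNr.
  have Hp : 0 < - c * \sum_j v 0 j * Z j j0.
    apply: mulr_gt0; first by rewrite oppr_gt0.
    by have := vZ j0; rewrite mxE.
  by apply: (lt_le_trans Hp); rewrite -subr_ge0 addrK ler0n.
have H2 : (w *m Z) 0 j0 <= 0.
  rewrite /Z mulmxBr mulmx1 mxE wj0 add0r mxE oppr_le0.
  by apply: (nn_mul (A := w)) => // a b; rewrite [a]ord1.
by move: (lt_le_trans H1 H2); rewrite ltxx.
Qed.

End MC.
Section NI.
Variable R : realType.

Lemma le_sum_term (I : finType) (F : I -> R) (j : I) :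
  (forall i, 0 <= F i) -> F j <= \sum_i F i.
Proof.
move=> H; rewrite (bigD1 j) //= lerDl; apply: sumr_ge0 => i _; exact: H.
Qed.

Lemma nonneg_inv (n : nat) (X : 'M[R]_n) :
  mx_nonneg X ->
  (forall (s : R) (v : 'rV[R]_n), 1 <= s -> v *m X = s *: v -> v = 0) ->
  (1%:M - X) \in unitmx /\ mx_nonneg (invmx (1%:M - X)).
Proof.
move=> X0 Hev.
have unit_t : forall t : R, 0 <= t -> t <= 1 -> (1%:M - t *: X) \in unitmx.
  move=> t t0 t1; rewrite unitmxE unitfE; apply/negP => /det0P [v vn0 Hv].
  have Hv' : v = t *: (v *m X).
    by move/eqP: Hv; rewrite mulmxBr mulmx1 subr_eq0 -scalemxAr => /eqP.
  have [t0'|tpos] := eqVneq t 0.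
    by move: vn0; rewrite Hv' t0' scale0r eqxx.
  move/negP: vn0; apply; apply/eqP; apply: (Hev t^-1).
    by rewrite invf_ge1 // lt_def tpos t0.
  by rewrite {2}Hv' scalerA mulVf // scale1r.
pose N t := invmx (1%:M - t *: X).
have cont : forall t : R, 0 <= t -> t <= 1 -> forall i j, N x i j @[x --> t] --> N t i j.
  move=> t t0 t1; apply: cvg_invmx; first exact: unit_t.
  move=> i j; rewrite !mxE; under eq_cvg do rewrite !mxE.
  apply: cvgB; first exact: cvg_cst.
  by apply: cvgM; [exact: cvg_id | exact: cvg_cst].
pose S := [set t : R | (0 <= t <= 1) /\ forall u, 0 <= u <= t -> mx_nonneg (N u)].
have N0 : mx_nonneg (N 0).
  by rewrite /N scale0r subr0 invmx1 => i j; rewrite mxE; case: (i == j).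
have S0 : S 0.
  split; first by rewrite lexx ler01.
  move=> u /andP[u0 u0']; have -> : u = 0 by apply/le_anti; rewrite u0 u0'.
  done.
have Sub : has_ubound S by exists 1 => t [/andP[_ ]].
set T := sup S.
have T0 : 0 <= T := ub_le_sup Sub S0.
have T1 : T <= 1.
  by apply: ge_sup; [exists 0 | move=> t [/andP[_ ]]].
have C1 : forall u, 0 <= u -> u < T -> mx_nonneg (N u).
  move=> u u0 uT; have [t [_ Ht] ut] := sup_gt (ex_intro _ 0 S0) uT.
  by apply: Ht; rewrite u0 ltW.
have C2 : mx_nonneg (N T).
  have [->|Tn0] := eqVneq T 0; first done.
  move=> i j; rewrite leNgt; apply/negP => Hneg.
  have HT : 0 < T by rewrite lt_def Tn0 T0.
  have cl := cvg_at_left_filter (cont T T0 T1 i j).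
  have : \forall x \near T^'-, (0 < x /\ x < T) /\ N x i j < 0.
    near=> x; split; [split|].
    - by near: x; exact: nbhs_left_gt.
    - by near: x; exact: nbhs_left_lt.
    - by near: x; exact: cvgr_lt cl 0 Hneg.
  move=> /filter_ex [x [[x0 xT] Hx]].
  by have := C1 x (ltW x0) xT i j; rewrite leNgt Hx.
have ST : S T.
  split; first by rewrite T0 T1.
  move=> u /andP[u0 uT]; have [uT'|->] : u < T \/ u = T.
    by move: uT; rewrite le_eqVlt => /orP[/eqP ->|]; [right|left].
  - exact: C1.
  - exact: C2.
have TT : T = 1.
  apply/eqP; rewrite eq_le T1 /= leNgt; apply/negP => T1lt.
  pose one := const_mx 1 : 'rV[R]_n.
  pose v := one *m N T.
  have UT := unit_t T T0 T1.
  have vZ : v *m (1%:M - T *: X) = one by rewrite /v -mulmxA mulVmx // mulmx1.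
  have one0 : mx_nonneg one by move=> a b; rewrite mxE.
  have vX0 : forall j, 0 <= (v *m X) 0 j.
    by move=> j; apply: nn_mul => //; apply: nn_mul.
  have Ev : forall j, v 0 j = 1 + T * (v *m X) 0 j.
    move=> j; move/rowP: vZ => /(_ j); rewrite mulmxBr mulmx1 -scalemxAr !mxE => E.
    by rewrite -E; ring.
  pose s := \sum_j (v *m X) 0 j.
  have s0 : 0 <= s by apply: sumr_ge0 => j _.
  have vXs : forall j, (v *m X) 0 j <= s by move=> j; exact: le_sum_term.
  pose d := Num.min (1 - T) (s + 1)^-1.
  have d0 : 0 < d by rewrite /d lt_min subr_gt0 T1lt invr_gt0; lra.
  have d1 : d <= 1 - T by rewrite /d ge_min lexx.
  have ds : d * s < 1.
    have : d <= (s + 1)^-1 by rewrite /d ge_min lexx orbT.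
    move=> h; apply: (le_lt_trans (ler_wpM2r s0 h)).
    by rewrite ltr_pdivrMl ?mulr1; lra.
  have Sd : S (T + d).
    split; first by apply/andP; split; lra.
    move=> u /andP[u0 ud]; have [uT|Tu] := leP u T.
      by apply: ST.2; rewrite u0 uT.
    have u1 : u <= 1 by lra.
    have uX0 : mx_nonneg (u *: X) by move=> a b; rewrite mxE; apply: mulr_ge0 => //; lra.
    apply: (mcrit (v := v)) => //; first exact: unit_t.
      by move=> j; have := Ev j; have := mulr_ge0 T0 (vX0 j); lra.
    move=> j; have -> : (v *m (1%:M - u *: X)) 0 j = v 0 j - u * (v *m X) 0 j by rewrite mulmxBr mulmx1 -scalemxAr !mxE.
    rewrite Ev.
    have h : (u - T) * (v *m X) 0 j <= d * s.
      by apply: ler_pM => //; lra.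
    lra.
  by have := ub_le_sup Sub Sd; rewrite -/T => h; lra.
have [_ HS] := ST; rewrite TT in HS.
have HN1 : mx_nonneg (N 1) by apply: HS; rewrite ler01 lexx.
split; first by have := unit_t 1 ler01 (lexx 1); rewrite scale1r.
by move: HN1; rewrite /N scale1r.
Unshelve. all: by end_near.
Qed.

End NI.
Section SP.
Variable R : realType.

Lemma sing_vec (n : nat) (A : 'M[R]_n) : ~~ (A \in unitmx) ->
  exists2 v : 'rV_n, v != 0 & v *m A = 0.
Proof. by rewrite unitmxE unitfE negbK => /det0P. Qed.

Lemma rho_lt1_inv (n : nat) (X : 'M[R]_n) : mx_nonneg X ->
  spectral_radius X < 1 ->
  (1%:M - X) \in unitmx /\ mx_nonneg (invmx (1%:M - X)).
Proof.
move=> X0 Hr; apply: nonneg_inv => // s v s1 Hv.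
apply/eqP; apply: contraT => vn0.
have := real_eig vn0 Hv; rewrite ger0_norm; last by apply: le_trans s1.
by move=> h; have := le_lt_trans (le_trans s1 h) Hr; rewrite ltxx.
Qed.

Lemma LB (n : nat) (Q : 'M[R]_n) (y : 'rV[R]_n) (c : R) : mx_nonneg Q ->
  (forall j, 0 <= y 0 j) -> y != 0 -> 0 < c ->
  (forall j, c * y 0 j <= (y *m Q) 0 j) -> c <= spectral_radius Q.
Proof.
move=> Q0 y0 yn0 c0 Hy; rewrite leNgt; apply/negP => Hlt.
pose X := c^-1 *: Q.
have X0 : mx_nonneg X by move=> a b; rewrite mxE; apply: mulr_ge0 => //; rewrite invr_ge0 ltW.
have [U N0] : (1%:M - X) \in unitmx /\ mx_nonneg (invmx (1%:M - X)).
  apply: nonneg_inv => // s v s1 Hv.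
  apply/eqP; apply: contraT => vn0.
  have HvQ : v *m Q = (c * s) *: v.
    by move: Hv; rewrite /X -scalemxAr => /(congr1 (fun M => c *: M)); rewrite !scalerA mulfV ?gt_eqF // scale1r.
  have := real_eig vn0 HvQ; rewrite ger0_norm; last by apply: mulr_ge0; [exact: ltW | exact: le_trans s1].
  move=> h; have := le_lt_trans h Hlt.
  by rewrite -{2}[c]mulr1 ltr_pM2l // ltNge s1.
pose w := y *m (1%:M - X).
have w0 : forall j, w 0 j <= 0.
  move=> j; rewrite /w mulmxBr mulmx1 -scalemxAr.
  have -> : (y - c^-1 *: (y *m Q)) 0 j = y 0 j - c^-1 * (y *m Q) 0 j by rewrite !mxE.
  rewrite subr_le0 -(ler_pM2l c0) mulrA mulfV ?gt_eqF // mul1r; exact: Hy.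
have yE : y = w *m invmx (1%:M - X) by rewrite /w -mulmxA mulmxV // mulmx1.
move/negP: yn0; apply; apply/eqP/rowP => j; rewrite mxE.
apply/le_anti; rewrite y0 andbT yE mxE.
rewrite -oppr_ge0 -sumrN; apply: sumr_ge0 => k _; rewrite -mulNr; apply: mulr_ge0 => //.
by rewrite oppr_ge0.
Qed.

Lemma eig_nonneg_vec (n : nat) (X : 'M[R]_n) (z : R[i]) : mx_nonneg X ->
  eigenvalue (complexify X) z ->
  exists y : 'rV[R]_n, [/\ forall j, 0 <= y 0 j, y != 0 &
    forall j, Normc.normc z * y 0 j <= (y *m X) 0 j].
Proof.
move=> X0 /eig_ineq [y [y0 [i yi] Hy]].
exists (\row_j y j); split.
- by move=> j; rewrite mxE.
- by apply/negP => /eqP /rowP /(_ i); rewrite !mxE => e; move: yi; rewrite e ltxx.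
- move=> j; rewrite !mxE; apply: (le_trans (Hy j)); apply: ler_sum => k _.
  by rewrite mxE ger0_norm.
Qed.

Lemma rho_ge_min (n : nat) (Q : 'M[R]_n) (m : R) : (0 < n)%N ->
  mx_nonneg Q -> 0 < m -> (forall i j, m <= Q i j) -> m <= spectral_radius Q.
Proof.
move=> n0 Q0 m0 Hm.
apply: (LB (y := const_mx 1)) => //.
- by move=> j; rewrite mxE.
- apply/negP => /eqP /rowP /(_ (Ordinal n0)); rewrite !mxE => /eqP; rewrite oner_eq0.
  done.
- move=> j; rewrite !mxE mulr1.
  under eq_bigr do rewrite mxE mul1r.
  apply: (le_trans (Hm j j)); exact: (le_sum_term j (fun k => Q0 k j)).
Qed.

Lemma rho_strict (n : nat) (P Q : 'M[R]_n) (m : R) : (0 < n)%N ->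
  mx_nonneg P -> 0 < m -> (forall i j, P i j + m <= Q i j) ->
  spectral_radius P < spectral_radius Q.
Proof.
move=> n0 P0 m0 Hm.
have Q0 : mx_nonneg Q by move=> i j; apply: le_trans (Hm i j); apply: addr_ge0 => //; exact: ltW.
have mQ : m <= spectral_radius Q.
  apply: rho_ge_min => // i j; apply: le_trans (Hm i j); rewrite lerDr; exact: P0.
have : spectral_radius P <= spectral_radius Q - m.
  apply: rho_le; first by rewrite subr_ge0.
  move=> z Hz; have [y [y0 yn0 Hy]] := eig_nonneg_vec P0 Hz.
  have: Normc.normc z + m <= spectral_radius Q.
    apply: (LB (y := y)) => //.
      by apply: ltr_wpDl => //; exact: normc_ge0.
    move=> j; rewrite mulrDl.
    have h1 : (y *m P) 0 j + m * y 0 j <= (y *m Q) 0 j.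
      rewrite !mxE.
      apply: (@le_trans _ _ (\sum_i (y 0 i * P i j + m * y 0 i))).
        rewrite big_split /= lerD2l -mulr_sumr; apply: ler_wpM2l; first exact: ltW.
        exact: (le_sum_term j y0).
      apply: ler_sum => i _; rewrite [m * _]mulrC -mulrDr; apply: ler_wpM2l; [exact: y0 | exact: Hm].
    by apply: le_trans h1; apply: lerD => //; exact: Hy.
  by move=> h; rewrite lerBrDr.
by move=> h; apply: le_lt_trans h _; rewrite ltrBlDr ltrDl.
Qed.

End SP.
Section Help.
Variable R : realType.

Lemma exists_min_pos (I : finType) (f : I -> R) :
  (forall i, 0 < f i) -> exists m, 0 < m /\ forall i, m <= f i.
Proof.
move=> H.
suff [m [m0 Hm]] : exists m, 0 < m /\ forall i, i \in enum I -> m <= f i.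
  by exists m; split => // i; apply: Hm; rewrite mem_enum.
elim: (enum I) => [|x s [m [m0 Hm]]].
  by exists 1; split => //; rewrite ltr01.
exists (Num.min m (f x)); split; first by rewrite lt_min m0 H.
move=> i; rewrite in_cons => /orP[/eqP ->|/Hm h].
  by rewrite ge_min lexx orbT.
by rewrite ge_min h.
Qed.

Lemma pos_mul_l (n : nat) (P Q : 'M[R]_n) :
  mx_pos P -> mx_nonneg Q -> (forall j, exists k, 0 < Q k j) -> mx_pos (P *m Q).
Proof.
move=> P0 Q0 HQ i j; have [k Hk] := HQ j; rewrite mxE.
apply: lt_le_trans (le_sum_term (F := fun k => P i k * Q k j) k _).
  exact: mulr_gt0.
by move=> a; apply: mulr_ge0; [exact: ltW | exact: Q0].
Qed.

Lemma pos_mul_r (n : nat) (P Q : 'M[R]_n) :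
  mx_nonneg P -> mx_pos Q -> (forall i, exists k, 0 < P i k) -> mx_pos (P *m Q).
Proof.
move=> P0 Q0 HP i j; have [k Hk] := HP i; rewrite mxE.
apply: lt_le_trans (le_sum_term (F := fun k => P i k * Q k j) k _).
  exact: mulr_gt0.
by move=> a; apply: mulr_ge0; [exact: P0 | exact: ltW].
Qed.

Lemma spread (n : nat) (f : 'I_n -> R) (c : R) (j0 : 'I_n) :
  0 < c -> c <= 1 -> (forall i, 0 <= f i) ->
  (forall S : {set 'I_n}, S != finset.set0 -> S != [set: 'I_n]%SET ->
     exists i k, [/\ i \notin S, k \in S & c * f i <= f k]) ->
  forall i, f i <= f j0 / c ^+ n.
Proof.
move=> c0 c1 f0 H.
pose S k := [set i | f i * c ^+ k <= f j0]%SET.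
have j0S : forall k, j0 \in S k.
  by move=> k; rewrite inE ler_piMr // exprn_ile1 // ltW.
have Sinc : forall k, S k \subset S k.+1.
  move=> k; apply/fintype.subsetP => i; rewrite !inE => h; apply: le_trans h.
  by rewrite exprSr mulrA ler_piMr // mulr_ge0 // exprn_ge0 // ltW.
have Hcard : forall k, (minn k.+1 n <= #|S k|)%N.
  elim => [|k IH].
    rewrite (leq_trans (geq_minl _ _)) //; apply/card_gt0P; exists j0; exact: j0S.
  have [ST|SnT] := eqVneq (S k) [set: 'I_n]%SET.
    have : S k.+1 = [set: 'I_n]%SET by apply/eqP; rewrite finset.eqEsubset finset.subsetT -ST Sinc.
    by move=> ->; rewrite cardsT card_ord geq_minr.
  have Sn0 : S k != finset.set0 by apply/set0Pn; exists j0; exact: j0S.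
  have [i [k' [iS k'S Hik]]] := H _ Sn0 SnT.
  have iS' : i \in S k.+1.
    rewrite inE; move: k'S; rewrite inE => h; apply: le_trans h.
    rewrite exprS mulrA [f i * c]mulrC ler_wpM2r // exprn_ge0 // ltW //.
  have Hp : S k \proper S k.+1.
    by rewrite properE Sinc; apply/subsetPn; exists i.
  have := proper_card Hp => h.
  apply: leq_trans _ h; have : (minn k.+2 n <= (minn k.+1 n).+1)%N by lia.
  by move=> /leq_trans; apply; rewrite ltnS.
have Sfull : S n = [set: 'I_n]%SET.
  apply/eqP; rewrite eqEcard finset.subsetT cardsT card_ord.
  by have := Hcard n; rewrite /minn ltnNge leqnSn.
move=> i; have : i \in S n by rewrite Sfull inE.
rewrite inE => h; rewrite ler_pdivlMr // exprn_gt0 //.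
Qed.

Lemma entry3 (n : nat) (L N B : 'M[R]_n) i j :
  (L *m N *m B) i j = \sum_k (\sum_l L i l * N l k) * B k j.
Proof. by rewrite mxE; apply: eq_bigr => k _; rewrite mxE. Qed.

Lemma entry_diag (n : nat) (d : 'rV[R]_n) (N B : 'M[R]_n) i j :
  (diag_mx d *m N *m B) i j = \sum_k d 0 i * N i k * B k j.
Proof. by rewrite mul_diag_mx mxE; apply: eq_bigr => k _; rewrite mxE. Qed.

Lemma entry_w (n : nat) (y : 'rV[R]_n) (Q : 'M[R]_n) k :
  (y *m (1%:M - Q)) 0 k = y 0 k - (y *m Q) 0 k.
Proof. by rewrite mulmxBr mulmx1 !mxE. Qed.

Lemma entry_XK (n : nat) (y : 'rV[R]_n) (P Q : 'M[R]_n) s k :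
  (y *m (P + s *: Q)) 0 k = (y *m P) 0 k + s * (y *m Q) 0 k.
Proof. by rewrite mulmxDr -scalemxAr !mxE. Qed.

Lemma eps_ex (G : R) : 0 <= G -> exists eps, [/\ 0 < eps, eps <= 1 & G * eps <= 4^-1].
Proof.
move=> G0; exists (4 * G + 4)^-1; split.
- by rewrite invr_gt0; lra.
- by rewrite invf_le1; lra.
- by rewrite -[G * _]/(G / (4 * G + 4)) ler_pdivrMr; lra.
Qed.

Lemma del_ex (H rA : R) : 0 <= H -> 0 < rA ->
  exists del, [/\ 0 < del, del <= rA & del * (4 * H + 4) <= 1].
Proof.
move=> H0 rA0; exists (Num.min rA (1 / (4 * H + 4))); split.
- by rewrite lt_min rA0 divr_gt0 //; lra.
- by rewrite ge_min lexx.
- rewrite -ler_pdivlMr; last lra.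
  by rewrite ge_min lexx orbT.
Qed.

Lemma final_arith (G eps del kap : R) : 0 <= G -> 0 <= kap -> 0 < del ->
  G * eps <= 4^-1 -> del * (4 * (G * kap) + 4) <= 1 ->
  1 <= G * (eps + del / 2 * kap) -> False.
Proof. move=> *; nra. Qed.

Lemma wk_arith (yk yAt yK z rA r eps yj kap : R) :
  z * yk <= yAt + rA * yK -> yk - z * yk <= eps * yj ->
  (rA - r) * yK <= (rA - r) * (kap * yj) ->
  yk - (yAt + r * yK) <= eps * yj + (rA - r) * (kap * yj).
Proof. move=> *; lra. Qed.

Lemma r_lem (del rA : R) : 0 < del -> del <= rA -> 0 <= rA - del / 2 < rA.
Proof. move=> *; apply/andP; split; lra. Qed.

End Help.
Unset Implicit Arguments.

Theorem mainTheorem8 (R : realType) (n : nat) (A K B : 'M[R]_n)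
  (delta l : 'I_n -> R) (rA : R) :
  (2 <= n)%N ->
  mx_nonneg A -> mx_nonneg K -> K != 0 ->
  (forall j, 0 < delta j <= 1) ->
  (forall j, 0 < l j) ->
  mx_nonneg B -> (forall j, exists i, B i j != 0) ->
  let D := K *m diag_mx (\row_j delta j) in
  let At := A + D in
  let L := diag_mx (\row_j l j) in
  mx_irreducible At -> spectral_radius At < 1 ->
  0 < rA -> spectral_radius (At + rA *: K) = 1 ->
  (forall r, 0 <= r < rA -> spectral_radius (At + r *: K) < 1) ->
  let M := Mmat L At K B in
  (forall r, 0 <= r < rA -> (1%:M - At - r *: K) \in unitmx) /\
  (* (i) *)
  (forall r, 0 <= r < rA -> mx_pos (M r)) /\
  {within `[0, rA[, continuous M} /\
  (* (ii) *)
  (forall r1 r2, 0 <= r1 -> r1 < r2 -> r2 < rA ->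
     forall i j, M r1 i j < M r2 i j) /\
  (* (iii) *)
  (forall r1 r2, 0 <= r1 -> r1 < r2 -> r2 < rA ->
     spectral_radius (M r1) < spectral_radius (M r2)) /\
  (spectral_radius (M r) @[r --> rA^'-] --> +oo).
Proof.
move=> n2 A0 K0 Kn0 Hd Hl B0 Bcol D At L Irr rAt rA0 rhoA rhoLt M.
have n0 : (0 < n)%N by apply: leq_trans n2.
pose X r := At + r *: K.
have At0 : mx_nonneg At.
  move=> i j; rewrite /At /D mul_mx_diag !mxE; apply: addr_ge0 => //.
  apply: mulr_ge0 => //; have := Hd j => /andP[h _]; exact: ltW.
clearbody At.
have X0 : forall r, 0 <= r -> mx_nonneg (X r).
  by move=> r r0 i j; rewrite !mxE; apply: addr_ge0 => //; apply: mulr_ge0.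
have XAt : forall r, 0 <= r -> forall i j, At i j <= X r i j.
  by move=> r r0 i j; rewrite !mxE lerDl; apply: mulr_ge0.
have eqZ : forall r, 1%:M - At - r *: K = 1%:M - X r.
  by move=> r; rewrite /X opprD addrA.
pose N r := invmx (1%:M - X r).
have ME : forall r, M r = L *m N r *m B by move=> r; rewrite /M /Mmat eqZ.
have inv : forall r, 0 <= r < rA -> (1%:M - X r) \in unitmx /\ mx_nonneg (N r).
  move=> r /andP[r0 rr]; apply: rho_lt1_inv; first exact: X0.
  by apply: rhoLt; rewrite r0 rr.
have NXl : forall r, 0 <= r < rA -> N r = 1%:M + X r *m N r.
  move=> r Hr; have [U _] := inv r Hr.
  have := mulmxV U; rewrite mulmxBl mul1mx => /eqP; rewrite subr_eq => /eqP.
  by apply.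
have NXr : forall r, 0 <= r < rA -> N r = 1%:M + N r *m X r.
  move=> r Hr; have [U _] := inv r Hr.
  have := mulVmx U; rewrite mulmxBr mulmx1 => /eqP; rewrite subr_eq => /eqP.
  by apply.
have [c [c0 [c1 Hc]]] : exists c, 0 < c /\ c <= 1 /\ forall i j, At i j != 0 -> c <= At i j.
  pose g := fun p : 'I_n * 'I_n => if At p.1 p.2 != 0 then At p.1 p.2 else 1.
  have hp : forall p, 0 < g p.
    move=> p; rewrite /g; case: ifP => h; last exact: ltr01.
    by rewrite lt_def h At0.
  have [m [m0 Hm]] := exists_min_pos hp.
  exists (Num.min m 1); split; first by rewrite lt_min m0 ltr01.
  split; first by rewrite ge_min lexx orbT.
  move=> i j h; have := Hm (i, j); rewrite /g /= h => h'.
  by rewrite ge_min h'.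
have Npos : forall r, 0 <= r < rA -> mx_pos (N r).
  move=> r Hr i j.
  have [_ Nn] := inv r Hr.
  pose Sj := [set k | 0 < N r k j]%SET.
  suff : Sj = [set: 'I_n]%SET.
    move=> h; have : i \in Sj by rewrite h inE.
    by rewrite inE.
  apply/eqP; apply: contraT => SnT.
  have jS : j \in Sj.
    rewrite inE (NXl r Hr) mxE [1%:M j j]mxE eqxx mulr1n.
    apply: ltr_wpDr; last exact: ltr01.
    by case/andP: Hr => r0 _; apply: (nn_mul (X0 r r0) Nn).
  have r0 : 0 <= r by case/andP: Hr.
  have Sn0 : Sj != finset.set0 by apply/set0Pn; exists j.
  have [a [b [aS bS Hab]]] := Irr Sj Sn0 SnT.
  suff h : 0 < N r a j by move: aS; rewrite inE h.
  rewrite (NXl r Hr) mxE [1%:M a j]mxE.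
  apply: ltr_wpDl; first by case: (a == j); rewrite ?mulr1n ?mulr0n ?ler01.
  rewrite mxE; apply: (lt_le_trans _ (le_sum_term (F := fun k => X r a k * N r k j) b _)).
    apply: mulr_gt0; last by move: bS; rewrite inE.
    by apply: lt_le_trans (XAt r r0 a b); rewrite lt_def Hab At0.
  by move=> k; apply: mulr_ge0; [exact: X0 | exact: Nn].
have Bcol' : forall j, exists k, 0 < B k j.
  by move=> j; have [k Hk] := Bcol j; exists k; rewrite lt_def Hk B0.
have L0 : mx_nonneg L by move=> i j; rewrite /L !mxE; apply: mulrn_wge0; exact: ltW.
have Lrow : forall i, exists k, 0 < L i k.
  by move=> i; exists i; rewrite /L !mxE eqxx mulr1n.
have Mpos : forall r, 0 <= r < rA -> mx_pos (M r).
  move=> r Hr; rewrite ME; apply: pos_mul_l => //; apply: pos_mul_r => //.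
  exact: Npos.
have [a0 [b0 Kab]] : exists a b, 0 < K a b.
  have : ~~ [forall a, forall b, K a b == 0].
    apply: contra Kn0 => /forallP H; apply/eqP/matrixP => a b; rewrite mxE.
    exact/eqP/(forallP (H a) b).
  rewrite negb_forall => /existsP [a]; rewrite negb_forall => /existsP [b Hb].
  by exists a, b; rewrite lt_def Hb K0.
have Ndiff : forall r1 r2, 0 <= r1 -> r1 < r2 -> r2 < rA ->
    N r2 = N r1 + (r2 - r1) *: (N r1 *m K *m N r2).
  move=> r1 r2 h1 h12 h2.
  have Hr1 : 0 <= r1 < rA by rewrite h1 (lt_trans h12 h2).
  have Hr2 : 0 <= r2 < rA by rewrite (le_trans h1 (ltW h12)) h2.
  have [U1 _] := inv r1 Hr1; have [U2 _] := inv r2 Hr2.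
  have E : 1%:M - X r1 = (1%:M - X r2) + (r2 - r1) *: K.
    rewrite /X scalerBl.
    have gen : forall a b c d : 'M[R]_n, a - (b + c) = a - (b + d) + (d - c).
      by move=> a b c' d; apply/matrixP => i j; rewrite !mxE; ring.
    exact: gen.
  have h1' : N r2 = N r1 *m (1%:M - X r1) *m N r2 by rewrite mulVmx // mul1mx.
  rewrite {1}h1' E mulmxDr mulmxDl -mulmxA mulmxV // mulmx1.
  by rewrite -scalemxAr -scalemxAl.
have NKN : forall r1 r2, 0 <= r1 -> r1 < r2 -> r2 < rA -> mx_pos (N r1 *m K *m N r2).
  move=> r1 r2 h1 h12 h2.
  have Hr1 : 0 <= r1 < rA by rewrite h1 (lt_trans h12 h2).
  have Hr2 : 0 <= r2 < rA by rewrite (le_trans h1 (ltW h12)) h2.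
  have [_ N1] := inv r1 Hr1.
  apply: pos_mul_r; [exact: nn_mul | exact: Npos | ].
  move=> i; exists b0; rewrite mxE.
  apply: (lt_le_trans _ (le_sum_term (F := fun k => N r1 i k * K k b0) a0 _)).
    by apply: mulr_gt0 => //; exact: Npos.
  by move=> k; apply: mulr_ge0; [exact: N1 | exact: K0].
have Mdiff : forall r1 r2, 0 <= r1 -> r1 < r2 -> r2 < rA ->
    M r2 = M r1 + (r2 - r1) *: (L *m (N r1 *m K *m N r2) *m B).
  move=> r1 r2 h1 h12 h2; rewrite !ME {1}(Ndiff r1 r2) // mulmxDr mulmxDl.
  congr (_ + _); move: (N r1 *m K *m N r2) => P.
  by rewrite scalemxAl scalemxAr.
have Dpos : forall r1 r2, 0 <= r1 -> r1 < r2 -> r2 < rA ->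
    mx_pos (L *m (N r1 *m K *m N r2) *m B).
  move=> r1 r2 h1 h12 h2; apply: pos_mul_l => //; apply: pos_mul_r => //.
  exact: NKN.
have key : forall (P Q : 'M[R]_n) (c' : R) i j, (P + c' *: Q) i j = P i j + c' * Q i j.
  by move=> *; rewrite !mxE.
split.
  by move=> r Hr; rewrite eqZ; exact: (inv r Hr).1.
split; first exact: Mpos.
split.
  apply: continuous_in_subspaceT => r; rewrite inE /= in_itv /= => /andP[r0 rr].
  have Hr : 0 <= r < rA by rewrite r0 rr.
  have [U _] := inv r Hr.
  have HN : forall a b, invmx (1%:M - At - x *: K) a b @[x --> r] -->
                        invmx (1%:M - At - r *: K) a b.
    apply: cvg_invmx; first by rewrite eqZ.
    move=> a b; rewrite !mxE; under eq_cvg do rewrite !mxE.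
    apply: cvgB; first exact: cvg_cst.
    by apply: cvgM; [exact: cvg_id | exact: cvg_cst].
  apply: cvg_mx_entry => i j; rewrite /M /Mmat.
  under eq_cvg do rewrite entry3.
  rewrite entry3; apply: cvg_sum_fin => k; apply: cvgM; last exact: cvg_cst.
  apply: cvg_sum_fin => l'; apply: cvgM; first exact: cvg_cst.
  exact: HN.
split.
  move=> r1 r2 h1 h12 h2 i j; rewrite (Mdiff r1 r2) // key.
  rewrite ltrDl; apply: mulr_gt0; first by rewrite subr_gt0.
  exact: Dpos.
split.
  move=> r1 r2 h1 h12 h2.
  have Hr1 : 0 <= r1 < rA by rewrite h1 (lt_trans h12 h2).
  pose f := fun p : 'I_n * 'I_n => (r2 - r1) * (L *m (N r1 *m K *m N r2) *m B) p.1 p.2.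
  have hp : forall p, 0 < f p.
    by move=> p; apply: mulr_gt0; [rewrite subr_gt0 | exact: Dpos].
  have [m [m0 Hm]] := exists_min_pos hp.
  apply: (rho_strict n0 (m := m)) => //.
    by move=> i j; apply: ltW; exact: Mpos.
  move=> i j; rewrite (Mdiff r1 r2) // key lerD2l.
  exact: (Hm (i, j)).
have [lm [lm0 Hlm]] := exists_min_pos Hl.
have hb : forall j, 0 < \sum_k B k j.
  move=> j; have [k Hk] := Bcol' j.
  apply: (lt_le_trans Hk); exact: (le_sum_term k (fun a => B0 a j)).
have [bm [bm0 Hbm]] := exists_min_pos hb.
apply/cvgryPgt => Ab.
have Ab1 : 0 < `|Ab| + 1 by apply: ltr_wpDl; [exact: normr_ge0 | exact: ltr01].
pose W := (`|Ab| + 1) / (lm * bm).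
have W0 : 0 < W by rewrite /W divr_gt0 // mulr_gt0.
have MB : forall r, 0 <= r < rA -> (forall i j, W <= N r i j) ->
    `|Ab| + 1 <= spectral_radius (M r).
  move=> r Hr HW; apply: rho_ge_min => //.
  - by move=> i j; apply: ltW; exact: Mpos.
  move=> i j; rewrite ME /L entry_diag.
  have -> : `|Ab| + 1 = lm * W * bm.
    by rewrite /W; field; rewrite !gt_eqF.
  apply: (@le_trans _ _ (\sum_k lm * W * B k j)).
    by rewrite -mulr_sumr; apply: ler_wpM2l; [apply: mulr_ge0; apply: ltW | exact: Hbm].
  apply: ler_sum => k _; apply: ler_wpM2r; first exact: B0.
  apply: ler_pM; [exact: ltW | exact: ltW | | exact: HW].
  by have := Hlm i; rewrite mxE.
suff [r0 [Hr0 HW0]] : exists r0, (0 <= r0 < rA) /\ forall i j, W <= N r0 i j.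
  have r0rA : r0 < rA by case/andP: Hr0.
  have r00 : 0 <= r0 by case/andP: Hr0.
  near=> r.
  have r0r : r0 < r by near: r; exact: nbhs_left_gt.
  have rr : r < rA by near: r; exact: nbhs_left_lt.
  have Hr : 0 <= r < rA by rewrite rr (le_trans r00 (ltW r0r)).
  apply: (lt_le_trans _ (MB r Hr _)).
    by apply: (le_lt_trans (ler_norm Ab)); rewrite ltrDl ltr01.
  move=> i j; apply: (le_trans (HW0 i j)).
  rewrite (Ndiff r0 r) // key lerDl; apply: mulr_ge0; first by rewrite subr_ge0 ltW.
  by apply: ltW; exact: NKN.
case: (pselect (exists r0, (0 <= r0 < rA) /\ forall i j, W <= N r0 i j)) => // NoR.
exfalso.
pose W' := W / c ^+ n / c ^+ n.
have c0' : 0 <= c ^+ n by apply: exprn_ge0; exact: ltW.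
have W'0 : 0 <= W' by rewrite /W'; apply: divr_ge0 => //; apply: divr_ge0 => //; exact: ltW.
have bound : forall r, 0 <= r < rA -> forall i j, N r i j <= W'.
  move=> r Hr; have [_ Nn] := inv r Hr.
  have r0 : 0 <= r by case/andP: Hr.
  pose o := Ordinal n0.
  pose p0 := [arg min_(p < (o, o)) N r p.1 p.2]%O.
  have Hmin : forall p, N r p0.1 p0.2 <= N r p.1 p.2.
    by rewrite /p0; case: (@arg_minP _ _ _ (o, o) xpredT (fun p => N r p.1 p.2) isT) => q _ Hq p; exact: Hq.
  have small : N r p0.1 p0.2 < W.
    rewrite ltNge; apply/negP => h; apply: NoR; exists r; split => // i j.
    exact: le_trans h (Hmin (i, j)).
  set a := p0.1; set b := p0.2.
  have cn0 : 0 < c ^+ n by rewrite exprn_gt0.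
  have rowb : forall k, N r a k <= N r a b / c ^+ n.
    apply: (spread (f := fun k => N r a k)) => //;
    move=> S Sn0 SnT; have [i [k [iS kS Hik]]] := Irr S Sn0 SnT; exists i, k; split => //.
    rewrite {2}(NXr r Hr) mxE [1%:M a k]mxE mxE.
    apply: (le_trans _ (ler_wpDl _ (le_sum_term (F := fun l => N r a l * X r l k) i _))).
    - rewrite mulrC; apply: ler_wpM2l; first exact: Nn.
      apply: le_trans (Hc i k Hik) (XAt r r0 i k).
    - by case: (a == k); rewrite ?mulr1n ?mulr0n ?ler01.
    - by move=> l'; apply: mulr_ge0; [exact: Nn | exact: X0].
  have colb : forall i j, N r i j <= N r a j / c ^+ n.
    move=> i j; apply: (spread (f := fun i => N r i j)) => //.
    move=> S Sn0 SnT.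
    have Cn0 : (~: S)%SET != finset.set0.
      by apply: contra SnT => /eqP h; apply/eqP; rewrite -[S]finset.setCK h finset.setC0.
    have CnT : (~: S)%SET != [set: 'I_n]%SET.
      by apply: contra Sn0 => /eqP h; apply/eqP; rewrite -[S]finset.setCK h finset.setCT.
    have [p [q [pS qS Hpq]]] := Irr _ Cn0 CnT.
    exists q, p; split.
    - by move: qS; rewrite inE.
    - by move: pS; rewrite inE negbK.
    rewrite {2}(NXl r Hr) mxE [1%:M p j]mxE mxE.
    apply: (le_trans _ (ler_wpDl _ (le_sum_term (F := fun l => X r p l * N r l j) q _))).
    - apply: ler_wpM2r; first exact: Nn.
      apply: le_trans (Hc p q Hpq) (XAt r r0 p q).
    - by case: (p == j); rewrite ?mulr1n ?mulr0n ?ler01.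
    - by move=> l'; apply: mulr_ge0; [exact: X0 | exact: Nn].
  move=> i j; apply: (le_trans (colb i j)); rewrite /W' ler_pM2r ?invr_gt0 //.
  apply: (le_trans (rowb j)); rewrite ler_pM2r ?invr_gt0 //; exact: ltW.
pose o := Ordinal n0.
have [G [G0 HG]] : exists G, 0 <= G /\ G = n%:R * W'.
  by exists (n%:R * W'); split => //; apply: mulr_ge0 => //; exact: ler0n.
have [kap [kap0 Hkap]] : exists kap, 0 <= kap /\ forall k, \sum_a K a k <= kap.
  exists (\sum_b \sum_a K a b); split.
    by apply: sumr_ge0 => b _; apply: sumr_ge0 => a _; exact: K0.
  move=> k; apply: (le_sum_term k) => b; apply: sumr_ge0 => a _; exact: K0.
have [eps [eps0 eps1 Geps]] := eps_ex G0.
have [z [Hz Hz1]] := rho_gt (X := At + rA *: K) (a := 1 - eps)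
  (ltac:(by rewrite subr_ge0)) (ltac:(by rewrite rhoA ltrBlDr ltrDl)).
have [y [y0 yn0 Hy]] := eig_nonneg_vec (X0 rA (ltW rA0)) Hz.
pose jm := [arg max_(j > o) y 0 j]%O.
have jmax : forall k, y 0 k <= y 0 jm.
  by rewrite /jm; case: (@arg_maxP _ _ _ o xpredT (fun j => y 0 j) isT) => q _ Hq k; exact: Hq.
have yj0 : 0 < y 0 jm.
  have [k Hk] : exists k, y 0 k != 0.
    apply/existsP; move: yn0; apply: contraR; rewrite negb_exists => /forallP H.
    by apply/eqP/rowP => k; rewrite mxE; exact/eqP/negbNE/H.
  by apply: lt_le_trans (jmax k); rewrite lt_def Hk y0.
have GK0 : 0 <= G * kap by apply: mulr_ge0.
have [del [del0 delA delb]] := del_ex GK0 rA0.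
pose r := rA - del / 2.
have Hr : 0 <= r < rA by exact: r_lem.
have [U Nn] := inv r Hr.
have yE : y = (y *m (1%:M - X r)) *m N r by rewrite -mulmxA mulmxV // mulmx1.
have rAr : rA - r = del / 2 by rewrite /r; ring.
pose Bd := eps * y 0 jm + (rA - r) * (kap * y 0 jm).
have wk : forall k, (y *m (1%:M - X r)) 0 k <= Bd.
  move=> k; rewrite entry_w /X entry_XK.
  have Hyk := Hy k; rewrite entry_XK in Hyk.
  have f1 : y 0 k - Normc.normc z * y 0 k <= eps * y 0 jm.
    have h : 1 - Normc.normc z <= eps.
      by have := Hz1; rewrite ltrBlDr lerBlDr addrC => /ltW.
    apply: (@le_trans _ _ (eps * y 0 k)); last by apply: ler_wpM2l; [exact: ltW | exact: jmax].
    have -> : y 0 k - Normc.normc z * y 0 k = (1 - Normc.normc z) * y 0 k by ring.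
    by apply: ler_wpM2r => //; exact: y0.
  have f2 : (y *m K) 0 k <= kap * y 0 jm.
    rewrite mxE; apply: (@le_trans _ _ (\sum_a y 0 jm * K a k)).
      by apply: ler_sum => a _; apply: ler_wpM2r; [exact: K0 | exact: jmax].
    rewrite -mulr_sumr mulrC; apply: ler_wpM2r; [exact: ltW | exact: Hkap].
  have f3 : (rA - r) * (y *m K) 0 k <= (rA - r) * (kap * y 0 jm).
    by apply: ler_wpM2l; [rewrite rAr; apply: divr_ge0 => //; exact: ltW | exact: f2].
  by rewrite /Bd; exact: (wk_arith Hyk f1 f3).
have Bd0 : 0 <= Bd.
  rewrite /Bd; apply: addr_ge0; first by apply: mulr_ge0; apply: ltW.
  by apply: mulr_ge0; [rewrite rAr; apply: divr_ge0 => //; exact: ltW | apply: mulr_ge0 => //; exact: ltW].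
have key2 : y 0 jm <= n%:R * (Bd * W').
  have e := yE; move/rowP: e => /(_ jm) ->; rewrite mxE.
  apply: (@le_trans _ _ (\sum_(k < n) Bd * W')).
    apply: ler_sum => k _; apply: (@le_trans _ _ (Bd * N r k jm)).
      by apply: ler_wpM2r; [exact: Nn | exact: wk].
    by apply: ler_wpM2l => //; exact: bound.
  by rewrite sumr_const card_ord mulr_natl.
have H1 : 1 <= G * (eps + (rA - r) * kap).
  have : y 0 jm * 1 <= y 0 jm * (G * (eps + (rA - r) * kap)).
    rewrite mulr1; have -> : y 0 jm * (G * (eps + (rA - r) * kap)) = n%:R * (Bd * W') by rewrite HG /Bd; ring.
    exact: key2.
  by rewrite ler_pM2l.
move: H1; rewrite rAr => H1.
exact: (final_arith G0 kap0 del0 Geps delb).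
Unshelve. all: by end_near.
Qed.
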